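(* For $n,k\ge0$: if $n\equiv 2k+1\pmod 3$ and $n\ge 2k+1$, then with $m=(n-2k-1)/3$, \[ b_{n,k}=\binom{n+1}{m}-3\binom{n}{m-1}; \] otherwise $b_{n,k}=0$.
   Context: The numbers $b_{n,k}$ ($n,k\ge0$) are defined together with $a_{n,k}$ by $a_{0,0}=1$, $b_{0,0}=0$, $a_{0,k}=b_{0,k}=0$ for $k\ge1$, and for $n\ge1$, $k\ge0$: $a_{n,k}=b_{n-1,k-1}+a_{n-1,k+1}$, $b_{n,k}=a_{n-1,k}+b_{n-1,k+1}$, with $b_{n-1,-1}=0$. ($b_{n,k}$ counts partial S-Motzkin paths of length $n$ ending at height $k$ whose last non-down step is a horizontal step.) Binomial coefficients with negative lower index are $0$. *)

(* Defs.v *)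
From mathcomp Require Import all_boot all_algebra.
Set Implicit Arguments. Unset Strict Implicit. Unset Printing Implicit Defensive.

Fixpoint ab (n : nat) : nat -> nat * nat :=
  match n with
  | 0 => fun k => if k == 0 then (1, 0) else (0, 0)
  | n'.+1 => fun k =>
      let bprev := if k is k'.+1 then (ab n' k').2 else 0 in
      (bprev + (ab n' k.+1).1, (ab n' k).1 + (ab n' k.+1).2)
  end.

Definition a_nk (n k : nat) : nat := (ab n k).1.
Definition b_nk (n k : nat) : nat := (ab n k).2.

Definition binZ (n : nat) (j : int) : int :=
  match j with Posz j' => ('C(n, j'))%:Z | Negz _ => 0 end.

(* Main.v *)
Require Import Defs.
From mathcomp Require Import all_boot all_algebra zify ring.
Import GRing.Theory.
Local Open Scope ring_scope.

Lemma S1 (j : nat) : (Posz j.+1 - 1 = Posz j)%R.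
Proof. by rewrite -addn1 PoszD addrK. Qed.

Lemma binZS n (j : int) : binZ n.+1 j = binZ n j + binZ n (j - 1).
Proof.
case: j => [[|j]|j].
- by rewrite /binZ /= !bin0.
- by rewrite S1 /binZ binS PoszD addrC.
- by [].
Qed.

Definition F (n : nat) (j : int) : int := binZ n j - 2 * binZ n (j - 1).

Lemma FS n j : F n.+1 j = F n j + F n (j - 1).
Proof. rewrite /F !binZS; ring. Qed.

Lemma Fzero m : F (3 * m).+2 m.+1 = 0.
Proof.
rewrite /F S1 /binZ.
have H := mul_bin_left (3 * m).+2 m.
have E : ((3 * m).+2 - m = 2 * m.+1)%N by lia.
rewrite E -mulnA mulnCA in H.
have : 'C((3 * m).+2, m.+1) = 2 * 'C((3 * m).+2, m) :> nat.
  by apply/eqP; rewrite -(eqn_pmul2l (ltn0Sn m)) H.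
by move=> ->; rewrite PoszM subrr.
Qed.

Definition A n k : int :=
  if ((2*k <= n) && ((n - 2*k) %% 3 == 0))%N then F n ((n - 2*k) %/ 3)%N else 0.
Definition B n k : int :=
  if ((2*k+1 <= n) && ((n - (2*k+1)) %% 3 == 0))%N then F n ((n - (2*k+1)) %/ 3)%N else 0.

Lemma FS0 n : F n.+1 0 = F n 0.
Proof. by rewrite FS addr0. Qed.
Lemma FSS n m : F n.+1 m.+1 = F n m.+1 + F n m.
Proof. by rewrite FS S1. Qed.

Lemma main n : forall k, (a_nk n k)%:Z = A n k /\ (b_nk n k)%:Z = B n k.
Proof.
elim: n => [|n IH] k.
  by case: k.
have HB : (b_nk n.+1 k)%:Z = B n.+1 k.
  rewrite /b_nk /= -/(a_nk n k) -/(b_nk n k.+1) PoszD.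
  have [IHa0 _] := IH k.
  have [_ IHb1] := IH k.+1.
  rewrite IHa0 IHb1 /A /B.
  case: ifP => H1; case: ifP => H2; case: ifP => H3; try (exfalso; move: H1 H2 H3; lia).
  - have [m Em] : exists m, ((n - 2*k) %/ 3 = m.+1)%N.
      by exists ((n-2*k)%/3).-1; move: H1 H2 H3; lia.
    have E2 : ((n - (2 * k.+1 + 1)) %/ 3 = m)%N by move: H1 H2 H3 Em; lia.
    have E3 : ((n.+1 - (2 * k + 1)) %/ 3 = m.+1)%N by move: H1 H2 H3 Em; lia.
    by rewrite Em E2 E3 FSS.
  - have E1 : ((n - 2*k) %/ 3 = 0)%N by move: H1 H2 H3; lia.
    have E3 : ((n.+1 - (2 * k + 1)) %/ 3 = 0)%N by move: H1 H2 H3; lia.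
    by rewrite E1 E3 addr0 FS0.
  - by [].
split; last exact HB.
clear HB.
case: k => [|k].
  rewrite /a_nk /= -/(a_nk n 1).
  have [IHa1 _] := IH 1%N.
  rewrite IHa1 /A.
  case: ifP => H1; case: ifP => H2; try (exfalso; move: H1 H2; lia).
  - have [m Em] : exists m, ((n - 2) %/ 3 = m)%N by exists ((n-2)%/3)%N.
    have E3 : ((n.+1 - 2 * 0) %/ 3 = m.+1)%N by move: H1 H2 Em; lia.
    have En : (n = (3 * m).+2)%N by move: H1 H2 Em; lia.
    rewrite Em E3 FSS.
    have -> : F n m.+1 = 0 by rewrite En Fzero.
    by rewrite add0r.
  - by [].
rewrite /a_nk /= -/(a_nk n k.+2) -/(b_nk n k) PoszD.
have [IHa1 _] := IH k.+2.
have [_ IHb0] := IH k.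
rewrite IHa1 IHb0 /A /B.
case: ifP => H1; case: ifP => H2; case: ifP => H3; try (exfalso; move: H1 H2 H3; lia).
- have [m Em] : exists m, ((n - (2*k+1)) %/ 3 = m.+1)%N.
    by exists ((n - (2*k+1))%/3).-1%N; move: H1 H2 H3; lia.
  have E2 : ((n - 2 * k.+2) %/ 3 = m)%N by move: H1 H2 H3 Em; lia.
  have E3 : ((n.+1 - 2 * k.+1) %/ 3 = m.+1)%N by move: H1 H2 H3 Em; lia.
  by rewrite Em E2 E3 FSS.
- have E1 : ((n - (2*k+1)) %/ 3 = 0)%N by move: H1 H2 H3; lia.
  have E3 : ((n.+1 - 2 * k.+1) %/ 3 = 0)%N by move: H1 H2 H3; lia.
  by rewrite E1 E3 addr0 FS0.
- by [].
Qed.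

Theorem mainTheorem10 (n k : nat) :
  (b_nk n k)%:Z =
  (if ((n %% 3 == (2 * k + 1) %% 3)%N && (2 * k + 1 <= n)%N) then
     let m := ((n - (2 * k + 1)) %/ 3)%N in
     binZ n.+1 m%:Z - 3 * binZ n (m%:Z - 1)
   else 0).
Proof.
have [_ ->] := main n k.
rewrite /B.
have -> : ((2 * k + 1 <= n) && ((n - (2 * k + 1)) %% 3 == 0))%N =
          ((n %% 3 == (2 * k + 1) %% 3) && (2 * k + 1 <= n))%N.
  by apply/idP/idP; lia.
case: ifP => // _ /=.
rewrite -[Posz 'C(n.+1, _)]/(binZ n.+1 (Posz _)) /F binZS; ring.
Qed.
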